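(* Let $\epsilon,\gamma,\mu,\nu\in\mathbb R$, $\mathbf a=[\epsilon\ \gamma]^T$, $\mathbf b=[\mu\ \nu]^T$, let $\boldsymbol\psi:\mathbb R\to\mathbb R^2$, $|\boldsymbol\psi|=\|\boldsymbol\psi(x)\|_2$, and $$\mathbf M(x)=\mathbf N_1|\boldsymbol\psi|^2+\mathbf N_2|\boldsymbol\psi|^4+(2\mathbf N_1+4\mathbf N_2|\boldsymbol\psi|^2)\boldsymbol\psi\boldsymbol\psi^T,\quad \mathbf N_1=\begin{bmatrix}\epsilon&-\gamma\\ \gamma&\epsilon\end{bmatrix},\ \mathbf N_2=\begin{bmatrix}\mu&-\nu\\ \nu&\mu\end{bmatrix}.$$ Suppose that (1) $|\boldsymbol\psi(x)|>0$ for all $x\in\mathbb R$; (2) $\mathbf a$ and $\mathbf b$ are not both $\mathbf 0$; and (3) if $\mathbf a\neq\mathbf 0$, $\mathbf b\neq\mathbf 0$ and $$r_-:=\frac{-4(\epsilon\mu+\gamma\nu)-\sqrt{16(\epsilon\mu+\gamma\nu)^2-15(\epsilon^2+\gamma^2)(\mu^2+\nu^2)}}{5(\mu^2+\nu^2)}$$ is real and positive, then $\max_{x\in\mathbb R}|\boldsymbol\psi(x)|^2<r_-$. Then $\det(\mathbf M(x))>0$ for all $x\in\mathbb R$. *)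

(* Defs.v *)
From HB Require Import structures.
From mathcomp Require Import all_boot all_order all_algebra.
From mathcomp Require Import reals.
Set Implicit Arguments. Unset Strict Implicit. Unset Printing Implicit Defensive.
Import Order.TTheory GRing.Theory Num.Theory.
Local Open Scope ring_scope.

Definition mat2 {R : ringType} (a b c d : R) : 'M[R]_2 :=
  \matrix_(i < 2, j < 2)
    if i == 0 then (if j == 0 then a else b) else (if j == 0 then c else d).

Definition vec2 {R : ringType} (x y : R) : 'cV[R]_2 :=
  \col_(i < 2) (if i == 0 then x else y).

Definition norm2 {R : realType} (v : 'cV[R]_2) : R :=
  Num.sqrt (\sum_(i < 2) v i 0 ^+ 2).

Definition N1 {R : ringType} (eps gam : R) : 'M[R]_2 := mat2 eps (- gam) gam eps.
Definition N2 {R : ringType} (mu nu : R) : 'M[R]_2 := mat2 mu (- nu) nu mu.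

Definition Mmat {R : realType} (eps gam mu nu : R) (psi : R -> 'cV[R]_2) (x : R)
  : 'M[R]_2 :=
  let p := norm2 (psi x) in
  (p ^+ 2) *: N1 eps gam + (p ^+ 4) *: N2 mu nu
  + (2%:R *: N1 eps gam + (4%:R * p ^+ 2) *: N2 mu nu) *m (psi x *m (psi x)^T).

Definition disc {R : realType} (eps gam mu nu : R) : R :=
  16%:R * (eps * mu + gam * nu) ^+ 2
  - 15%:R * (eps ^+ 2 + gam ^+ 2) * (mu ^+ 2 + nu ^+ 2).

Definition r_minus {R : realType} (eps gam mu nu : R) : R :=
  (- (4%:R * (eps * mu + gam * nu)) - Num.sqrt (disc eps gam mu nu))
  / (5%:R * (mu ^+ 2 + nu ^+ 2)).

(* Main.v *)
Require Import Defs.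
From HB Require Import structures.
From mathcomp Require Import all_boot all_order all_algebra.
From mathcomp Require Import reals.
From mathcomp Require Import ring lra.
Import Order.TTheory GRing.Theory Num.Theory.
Local Open Scope ring_scope.
Lemma det2 (R : comNzRingType) (A : 'M[R]_2) : \det A = A 0 0 * A 1 1 - A 0 1 * A 1 0.
Proof.
rewrite (expand_det_row _ 0) !big_ord_recl big_ord0 /cofactor !det_mx11 !mxE /=.
have -> : lift (0:'I_2) (0:'I_1) = 1 by apply/val_inj.
have -> : lift (1:'I_2) (0:'I_1) = 0 by apply/val_inj.
rewrite /bump /= expr0 expr1 addr0 mul1r mulN1r mulrN.
by [].
Qed.

Lemma detM (R : realType) (eps gam mu nu : R) (psi : R -> 'cV[R]_2) x :
  let s := norm2 (psi x) ^+ 2 in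
  \det (Mmat eps gam mu nu psi x) =
  s ^+ 2 * (3%:R * (eps^+2 + gam^+2) + 8%:R * (eps * mu + gam * nu) * s
     + 5%:R * (mu^+2 + nu^+2) * s ^+ 2).
Proof.
move=> s.
have hs : s = psi x 0 0 ^+ 2 + psi x 1 0 ^+ 2.
  rewrite /s /norm2 sqr_sqrtr.
    rewrite !big_ord_recl big_ord0 addr0.
    by have -> : lift (0:'I_2) (0:'I_1) = 1 by apply/val_inj.
  by apply: sumr_ge0 => i _; apply: sqr_ge0.
rewrite /Mmat. cbv zeta. rewrite -/s. have -> : norm2 (psi x) ^+ 4 = s ^+ 2 by rewrite /s -exprM.
rewrite det2 /N1 /N2 /mat2 !mxE.
rewrite !big_ord_recl !big_ord0 !mxE /=.
have l1 : lift (0:'I_2) (0:'I_1) = 1 by apply/val_inj.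
have o2 : (ord0 : 'I_2) = 0 by apply/val_inj.
have o1 : (ord0 : 'I_1) = 0 by apply/val_inj.
rewrite !big_ord_recl !big_ord0 !mxE !o2 !o1 !l1.
rewrite hs. 
ring.
Qed.

Lemma vec2_eq0 (R : realType) (e g : R) : vec2 e g = 0 -> e = 0 /\ g = 0.
Proof.
move=> /matrixP h; split.
  by have := h 0 0; rewrite !mxE.
by have := h 1 0; rewrite !mxE.
Qed.

Lemma vec2_pos (R : realType) (e g : R) : vec2 e g != 0 -> 0 < e ^+ 2 + g ^+ 2.
Proof.
move=> hv; rewrite lt_def addr_ge0 ?sqr_ge0 // andbT.
apply/negP => /eqP h; move/negP: hv; apply.
have /andP[he hg] : (e ^+ 2 == 0) && (g ^+ 2 == 0).
  by rewrite -paddr_eq0 ?sqr_ge0 // h.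
move: he hg; rewrite !sqrf_eq0 => /eqP -> /eqP ->.
apply/eqP/matrixP => i j; rewrite !mxE; by case: ifP.
Qed.

Arguments vec2_eq0 {R e g}.
Arguments vec2_pos {R e g}.

Theorem proposition7p7 (R : realType) (eps gam mu nu : R) (psi : R -> 'cV[R]_2)
  (H1 : forall x : R, 0 < norm2 (psi x))
  (H2 : vec2 eps gam != 0 \/ vec2 mu nu != 0)
  (H3 : vec2 eps gam != 0 -> vec2 mu nu != 0 ->
        0 <= disc eps gam mu nu -> 0 < r_minus eps gam mu nu ->
        exists2 x0 : R, (forall x : R, norm2 (psi x) ^+ 2 <= norm2 (psi x0) ^+ 2)
                      & norm2 (psi x0) ^+ 2 < r_minus eps gam mu nu) :
  forall x : R, 0 < \det (Mmat eps gam mu nu psi x).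
Proof.
move=> x; rewrite detM.
set s := norm2 (psi x) ^+ 2.
have sp : 0 < s by rewrite /s exprn_gt0.
apply: mulr_gt0; first by rewrite exprn_gt0.
have Ag := sqr_ge0 eps; have Bg := sqr_ge0 gam.
have Cg := sqr_ge0 mu; have Dg := sqr_ge0 nu.
have [ha|ha] := eqVneq (vec2 eps gam) 0.
  case: H2; first by rewrite ha eqxx.
  move=> /vec2_pos hb; have [-> ->] := vec2_eq0 ha.
  rewrite expr2 !(mul0r, mulr0, add0r, addr0).
  by rewrite !mulr_gt0 ?exprn_gt0.
have hA := vec2_pos ha.
have [hb|hb] := eqVneq (vec2 mu nu) 0.
  have [-> ->] := vec2_eq0 hb.
  rewrite [(0:R) ^+ 2]expr2 !(mul0r, mulr0, add0r, addr0).
  by rewrite mulr_gt0.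
have hB := vec2_pos hb.
set A := eps ^+ 2 + gam ^+ 2 in hA *.
set B := mu ^+ 2 + nu ^+ 2 in hB *.
set c := eps * mu + gam * nu.
have [cge|clt] := lerP 0 c.
  have h1 : 0 <= c * s by apply: mulr_ge0 cge (ltW sp).
  have h2 : 0 < B * s ^+ 2 by apply: mulr_gt0 hB (exprn_gt0 _ sp).
  lra.
have hD : disc eps gam mu nu = 16%:R * c ^+ 2 - 15%:R * A * B by [].
suff : 0 < 5%:R * B * (3%:R * A + 8%:R * c * s + 5%:R * B * s ^+ 2).
  by rewrite pmulr_rgt0 // mulr_gt0.
have [dlt|dge] := ltP (disc eps gam mu nu) 0.
  rewrite hD in dlt.
  have : 0 <= (5%:R * B * s + 4%:R * c) ^+ 2 by apply: sqr_ge0.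
  nra.
set d := Num.sqrt (disc eps gam mu nu).
have d0 : 0 <= d by apply: sqrtr_ge0.
have dd : d ^+ 2 = 16%:R * c ^+ 2 - 15%:R * A * B by rewrite sqr_sqrtr // -hD.
have hAB : 0 < A * B by apply: mulr_gt0.
have dlt : d < - (4%:R * c) by nra.
have rp : 0 < r_minus eps gam mu nu.
  rewrite /r_minus -/d -/c divr_gt0 //; first by lra.
  by rewrite mulr_gt0.
have [x0 hmax hlt] := H3 ha hb dge rp.
have slt : s < r_minus eps gam mu nu by apply: le_lt_trans (hmax x) hlt.
move: slt; rewrite /r_minus -/d -/c -/B ltr_pdivlMr; last by rewrite mulr_gt0.
move=> slt.
nra.
Qed.
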